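(* Let $m,n\in\mathbb Z^+\cup\{\infty\}$ with $m<n$, let $k=14$ and $\ell_i=14^i$ for $i\in\mathbb N$, and let $(p_j)$, $(q_j)$ be increasing sequences of positive integers with $p_j\ge |P_{(m,j)}|-1$ and $q_j\ge|P_{(n,j)}|-1$. Let $U_A=\{u_i\}\subset\{a,x\}_\circ^*$ with $u_i=\big(a^{14^{p_j-r_i}}x^{14^{p_j-r_i}}\big)^{14^{r_i+1}}$ for $i\in P_{(m,j)}$, $r_i=i-\min P_{(m,j)}$, and $V_B=\{v_i\}\subset\{b,y\}_\circ^*$ with $v_i=\big(b^{14^{q_j-r'_i}}y^{14^{q_j-r'_i}}\big)^{14^{r'_i+1}}$ for $i\in P_{(n,j)}$, $r'_i=i-\min P_{(n,j)}$ (where $a,x,b,y$ are four distinct letters). Suppose that for all $i,j\in\mathbb N$: (a) $p_{j+1}\ge p_j+(j+2)m$; (b) $q_{j+1}\ge q_j+(j+2)n$ if $n\in\mathbb Z^+$, and $q_{j+1}\ge q_j+(j+2)^2$ if $n=\infty$; (c) $p_{\lfloor i/m\rfloor}\le q_{\lfloor i/n\rfloor}$ if $n\in\mathbb Z^+$, and $p_{\lfloor i/m\rfloor}\le q_{\lfloor\sqrt i\rfloor}$ if $n=\infty$. Then, with $\lambda=1/13$, for all $i,i',j\in\mathbb N$: (1) $U_A$ and $V_B$ are cyclically minimal, cyclically reduced, and satisfy $C'(\lambda)$; (2) for all $h\in\mathbb Z$, every piece $p$ of $y^h$ and $v_i$ has $|p|<\lambda|v_i|$; (3) $2\le|u_i|\le|v_i|$;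 (4) $u_i=u_{i'}$ or $v_i=v_{i'}$ implies $i=i'$; (5) $(|u_i|)$ is constant on each block $P_{(m,j)}$ and $(|v_i|)$ is constant on each block $P_{(n,j)}$; (6) $|u_{(j+1)m}|\ge\ell_{(j+1)m}|u_{jm}|$; and $|v_{(j+1)n}|\ge\ell_{(j+1)n}|v_{jn}|$ if $n\in\mathbb Z^+$, while $|v_{(j+1)^2}|\ge\ell_{(j+1)^2}|v_{j^2}|$ if $n=\infty$.
   Context: For $m\in\mathbb Z^+$ let $P_{(m,j)}=\{jm,\dots,(j+1)m-1\}$ and for $m=\infty$ let $P_{(\infty,j)}=\{j^2,\dots,(j+1)^2-1\}$ ($j\in\mathbb N$). Words: $S_\circ=S\cup S^{-1}\cup\{1\}$, words in $S_\circ^*$, $|w|$ length; a word is reduced if it has no subword $1$, $ss^{-1}$, $s^{-1}s$. $R_*$ is the closure of $R$ under cyclic shifts and formal inverses; $R$ is cyclically reduced if every element of $R_*$ is reduced, cyclically minimal if $R\cap\{r\}_*=\{r\}$ for each $r\in R$. A piece of $u,v$ is a common prefix of some $u'\in\{u\}_*$, $v'\in\{v\}_*$. $R$ satisfies $C'(\lambda)$ if whenever $u,v\in R$ and $u'\in\{u\}_*$, $v'\in\{v\}_*$ have common prefix $p$, either $u'=v'$ or $|p|<\lambda\min(|u|,|v|)$. *)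

(* Defs.v *)
From mathcomp Require Import all_boot all_order all_algebra.
Set Implicit Arguments. Unset Strict Implicit. Unset Printing Implicit Defensive.
Import Order.TTheory GRing.Theory Num.Theory.

Inductive gen := GA | GX | GB | GY.

(* Elements of S_o = S u S^-1 u {1}. *)
Inductive letter := One | Pos of gen | Neg of gen.

Definition word := seq letter.

Definition linv (l : letter) : letter :=
  match l with One => One | Pos s => Neg s | Neg s => Pos s end.

Definition winv (w : word) : word := rev (map linv w).

Definition gpow (s : gen) (N : nat) : word := nseq N (Pos s).

Definition wpow (w : word) (N : nat) : word := flatten (nseq N w).

Definition ypow (h : int) : word :=
  match h with Posz k => nseq k (Pos GY) | Negz k => nseq k.+1 (Neg GY) end.

Definition reduced (w : word) : Prop :=
  forall w1 w2 : word,
    w <> w1 ++ One :: w2 /\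
    (forall s, w <> w1 ++ Pos s :: Neg s :: w2 /\ w <> w1 ++ Neg s :: Pos s :: w2).

Inductive star (R : word -> Prop) : word -> Prop :=
| star_base w : R w -> star R w
| star_rot k w : star R w -> star R (rot k w)
| star_inv w : star R w -> star R (winv w).

Definition sing (r : word) : word -> Prop := fun w => w = r.

Definition cyc_reduced (R : word -> Prop) : Prop :=
  forall w, star R w -> reduced w.

Definition cyc_minimal (R : word -> Prop) : Prop :=
  forall r, R r -> forall w, (R w /\ star (sing r) w) <-> w = r.

Definition is_prefix (p w : word) : Prop := exists s, w = p ++ s.

Definition piece (p u v : word) : Prop :=
  exists u' v', star (sing u) u' /\ star (sing v) v' /\ is_prefix p u' /\ is_prefix p v'.

Definition Cprime (lam : rat) (R : word -> Prop) : Prop :=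
  forall u v, R u -> R v -> forall u' v' p,
    star (sing u) u' -> star (sing v) v' -> is_prefix p u' -> is_prefix p v' ->
    u' = v' \/ ((size p)%:R < lam * (minn (size u) (size v))%:R :> rat)%R.

Inductive ext := Fin of nat | Inf.

Definition ext_pos (n : ext) : Prop :=
  match n with Fin k => 0 < k | Inf => True end.

Definition ext_lt (m n : ext) : Prop :=
  match m, n with
  | Fin a, Fin b => a < b
  | Fin _, Inf => True
  | Inf, _ => False
  end.

(* min P_(n,j) : j*n for finite n, j^2 for n = oo *)
Definition bstart (n : ext) (j : nat) : nat :=
  match n with Fin k => j * k | Inf => j ^ 2 end.

Definition inP (n : ext) (j i : nat) : Prop := bstart n j <= i < bstart n j.+1.

Definition bsize (n : ext) (j : nat) : nat := bstart n j.+1 - bstart n j.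

Definition bidx (n : ext) (i : nat) : nat :=
  match n with Fin k => i %/ k | Inf => Nat.sqrt i end.

Definition growth (n : ext) (j : nat) : nat :=
  match n with Fin k => (j + 2) * k | Inf => (j + 2) ^ 2 end.

Definition the_set (f : nat -> word) : word -> Prop := fun w => exists i, w = f i.

(* Main.v *)
Require Import Defs.
From Stdlib Require Import PeanoNat.
From mathcomp Require Import all_boot all_order all_algebra zify.
Set Implicit Arguments. Unset Strict Implicit. Unset Printing Implicit Defensive.

Lemma mod_sub1 y M : M <= y < M.*2 -> y %% M = y - M.
Proof. move=> /andP[h1 h2]. rewrite -{1}(subnK h1) modnDr modn_small //. lia. Qed.

Lemma modMN x N : x %% N.*2 %% N = x %% N.
Proof. have hd : N %| N.*2 by rewrite -mul2n dvdn_mull.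
 exact: (modn_dvdm _ hd). Qed.

Lemma g_flip N x : 0 < N -> ((x + N) %% N.*2 < N) = ~~ (x %% N.*2 < N).
Proof.
move=> N0. rewrite -modnDml. have : x %% N.*2 < N.*2 by rewrite ltn_pmod // double_gt0.
move: (x %% N.*2) => r hr.
case: (ltnP r N) => h.
  rewrite modn_small; lia.
rewrite mod_sub1; lia.
Qed.

Lemma g_run N x d : 0 < N -> x %% N + d < N -> ((x + d) %% N.*2 < N) = (x %% N.*2 < N).
Proof.
move=> N0. rewrite -(modMN x N) -modnDml. have : x %% N.*2 < N.*2 by rewrite ltn_pmod // double_gt0.
move: (x %% N.*2) => r hr.
case: (ltnP r N) => h.
  rewrite (modn_small h) => hd. rewrite modn_small; lia.
rewrite mod_sub1; [|lia] => hd. rewrite modn_small; lia.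
Qed.

Lemma g_rev N a b : 0 < N -> (a + b + 1) %% N.*2 = 0 -> (a %% N.*2 < N) = ~~ (b %% N.*2 < N).
Proof.
move=> N0 H.
have E: a + b + 1 = (a %/ N.*2 + b %/ N.*2) * N.*2 + (a %% N.*2 + b %% N.*2 + 1).
  rewrite {1}(divn_eq a N.*2) {1}(divn_eq b N.*2); lia.
rewrite E modnMDl in H.
have : a %% N.*2 < N.*2 by rewrite ltn_pmod // double_gt0.
have : b %% N.*2 < N.*2 by rewrite ltn_pmod // double_gt0.
move: H; move: (a %% N.*2) (b %% N.*2) => ra rb H ha hb.
case: (ltnP (ra + rb + 1) N.*2) => h.
  rewrite modn_small in H; lia.
rewrite mod_sub1 in H; lia.
Qed.

Lemma mod0_shift N k : 0 < N -> (N - k %% N + k) %% N = 0.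
Proof.
move=> N0. have hr : k %% N < N by rewrite ltn_pmod.
have -> : N - k %% N + k = (k %/ N).+1 * N.
  rewrite {2}(divn_eq k N) mulSn; lia.
by rewrite modnMl.
Qed.

Lemma core_lt N N' k k' P : 0 < N -> N < N' ->
  (forall i, i < P -> ((i+k) %% N.*2 < N) = ((i+k') %% N'.*2 < N')) -> N.*2 < P -> False.
Proof.
move=> N0 NN H HP.
have N'0 : 0 < N' by lia.
have hr : k' %% N' < N' by rewrite ltn_pmod.
have h0 := H 0 ltac:(lia). rewrite add0n in h0.
have hN := H N ltac:(lia).
case: (ltnP (k' %% N' + N) N') => h.
  have e1 := g_run N'0 h.
  have e2 := g_flip k N0.
  rewrite (addnC N k) e2 (addnC N k') e1 h0 in hN.
  by case: (_ < N') hN.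
have hc : (N' - k' %% N' + k') %% N' = 0 by apply: mod0_shift.
have hcN : N' - k' %% N' + N < P by move: h HP hr; clear; lia.
have hcP : N' - k' %% N' < P by move: h HP hr; clear; lia.
move: hc hcN hcP; set c := N' - k' %% N' => hc hcN hcP.
have h2 : (c + k') %% N' + N < N' by rewrite hc.
have e1 := g_run N'0 h2.
have e2 := g_flip (c + k) N0.
have h0' := H c hcP. have hN' := H (c + N) hcN.
rewrite addnAC e2 addnAC e1 h0' in hN'.
by case: (_ < N') hN'.
Qed.

Lemma core_eq_lt N k k' P : 0 < N -> k %% N < k' %% N ->
  (forall i, i < P -> ((i+k) %% N.*2 < N) = ((i+k') %% N.*2 < N)) -> N < P -> False.
Proof.
move=> N0 hlt H HP.
have hr : k' %% N < N by rewrite ltn_pmod.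
have hc : (N - k' %% N + k') %% N = 0 by apply: mod0_shift.
have hcP : N - k' %% N < P by lia.
have hkc : k %% N + (N - k' %% N) < N by lia.
have hcc : (N - k' %% N + k') %% N + (N - (N - k' %% N)) < N by rewrite hc; lia.
have eq3 : N - k' %% N + k' + (N - (N - k' %% N)) = k' + N by lia.
move: hc hcP hkc hcc eq3; set c := N - k' %% N => hc hcP hkc hcc eq3.
have e1 := g_run N0 hkc.
have e2 := g_run N0 hcc.
have e3 := g_flip k' N0.
rewrite eq3 in e2.
have h0 := H 0 (leq_ltn_trans (leq0n N) HP). have hc' := H c hcP.
rewrite !add0n in h0. rewrite addnC e1 h0 -e2 e3 in hc'.
by case: (_ < N) hc'.
Qed.

Lemma core N N' k k' P : 0 < N -> 0 < N' ->
  (forall i, i < P -> ((i+k) %% N.*2 < N) = ((i+k') %% N'.*2 < N')) ->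
  (minn N N').*2 < P -> N = N' /\ k %% N.*2 = k' %% N.*2.
Proof.
move=> N0 N'0 H HP.
have NN : N = N'.
  case: (ltngtP N N') => // h.
  - exfalso; apply: (core_lt N0 h H); move: HP; rewrite /minn h //.
  - exfalso; apply: (core_lt N'0 h (k := k') (k' := k) (P := P)).
      by move=> i hi; rewrite H.
    move: HP; rewrite /minn; case: ifP => // h'; move: h h'; clear; lia.
subst N'; split => //.
have HP' : N < P by move: HP; rewrite minnn; clear H; lia.
have rr : k %% N = k' %% N.
  case: (ltngtP (k %% N) (k' %% N)) => // h; exfalso.
    exact: (core_eq_lt N0 h H HP').
  apply: (core_eq_lt N0 h (P := P)) => // i hi; by rewrite H.
have h0 := H 0 (leq_ltn_trans (leq0n N) HP'). rewrite !add0n in h0.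
have := modMN k N. have := modMN k' N.
have : k %% N.*2 < N.*2 by rewrite ltn_pmod // double_gt0.
have : k' %% N.*2 < N.*2 by rewrite ltn_pmod // double_gt0.
move: h0; move: (k %% N.*2) (k' %% N.*2) rr => a b rr h0 hb ha eb ea.
clear H HP HP'.
case: (ltnP a N) h0 => ha'; case: (ltnP b N) => hb' //= _.
  by rewrite -ea -eb !modn_small in rr.
rewrite (@mod_sub1 a N) ?ha' ?ha // in ea. rewrite (@mod_sub1 b N) ?hb' ?hb // in eb. lia.
Qed.

Definition shape N (c1 c2 : letter) L (w : word) :=
  size w = L /\ exists k, forall i, i < L ->
    nth One w i = if (i + k) %% N.*2 < N then c1 else c2.

Lemma shape_rot N c1 c2 L w t : 0 < N -> N.*2 %| L -> shape N c1 c2 L w -> shape N c1 c2 L (rot t w).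
Proof.
move=> N0 hL [hs [k hk]]; split; first by rewrite size_rot.
case: (leqP t L) => htL; last by exists k; rewrite rot_oversize // hs ltnW.
exists (k + t) => i hi.
rewrite /rot nth_cat size_drop hs.
case: (ltnP i (L - t)) => h.
  rewrite nth_drop hk; last by move: h; clear; lia.
  by rewrite (_ : t + i + k = i + (k + t)) //; lia.
rewrite nth_take; last by move: h hi; clear; lia.
rewrite hk; last by move: h hi; clear; lia.
have -> : i + (k + t) = (L %/ N.*2) * N.*2 + (i - (L - t) + k).
  rewrite divnK //; move: h hi htL; clear; lia.
by rewrite modnMDl.
Qed.

Lemma shape_winv N c1 c2 L w : 0 < N -> N.*2 %| L -> shape N c1 c2 L w ->
  shape N (linv c2) (linv c1) L (winv w).
Proof.
move=> N0 hL [hs [k hk]]; split; first by rewrite /winv size_rev size_map.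
exists (N.*2 - k %% N.*2) => i hi.
rewrite /winv nth_rev size_map hs //.
rewrite (nth_map One) ?hs; last by move: hi; clear; lia.
rewrite hk; last by move: hi; clear; lia.
have hk2 : k %% N.*2 < N.*2 by rewrite ltn_pmod // double_gt0.
have E : (L - i.+1 + k) + (i + (N.*2 - k %% N.*2)) + 1 = (L %/ N.*2 + k %/ N.*2 + 1) * N.*2.
  rewrite !mulnDl mul1n divnK // {1}(divn_eq k N.*2); move: hi hk2; clear; lia.
have := @g_rev N (L - i.+1 + k) (i + (N.*2 - k %% N.*2)) N0.
rewrite E modnMl => /(_ erefl) ->.
by case: (_ < N).
Qed.

Lemma base_nth c d N K : size (wpow (gpow c N ++ gpow d N) K) = N.*2 * K /\
  forall i, i < N.*2 * K -> nth One (wpow (gpow c N ++ gpow d N) K) i =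
     if i %% N.*2 < N then Pos c else Pos d.
Proof.
elim: K => [|K [IHs IHk]]; first by split => //; rewrite muln0.
have hs : size (wpow (gpow c N ++ gpow d N) K.+1) = N.*2 * K.+1.
  rewrite /wpow /= size_cat. rewrite /wpow in IHs. rewrite IHs size_cat !size_nseq mulnS; lia.
split => // i hi.
rewrite /wpow /= nth_cat size_cat !size_nseq.
case: (ltnP i (N + N)) => h.
  rewrite modn_small; last by move: h; clear; lia.
  rewrite nth_cat size_nseq; case: (ltnP i N) => h2.
    by rewrite nth_nseq h2.
  rewrite nth_nseq; case: ifP => //; move: h h2; clear; lia.
have := IHk (i - (N + N)). rewrite /wpow => ->; last by move: h hi; rewrite mulnS; clear; lia.
by rewrite -{2}(subnK h) -addnn modnDr.
Qed.

Lemma shape_base c d N K : shape N (Pos c) (Pos d) (N.*2 * K) (wpow (gpow c N ++ gpow d N) K).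
Proof.
have [hs hn] := base_nth c d N K. split => //; exists 0 => i hi; by rewrite addn0 hn.
Qed.

Definition spair c d N L w := shape N (Pos c) (Pos d) L w \/ shape N (Neg d) (Neg c) L w.

Lemma star_spair c d N K w : 0 < N ->
  star (sing (wpow (gpow c N ++ gpow d N) K)) w -> spair c d N (N.*2 * K) w.
Proof.
move=> N0; have hL : N.*2 %| N.*2 * K by apply: dvdn_mulr.
elim => [w0 -> | t w0 _ [h|h] | w0 _ [h|h]].
- by left; apply: shape_base.
- by left; apply: shape_rot.
- by right; apply: shape_rot.
- by right; apply: (shape_winv N0 hL h).
- by left; apply: (shape_winv N0 hL h).
Qed.

Lemma spair_nth c d N L w : spair c d N L w -> c <> d ->
  exists (c1 c2 : letter) k, c1 <> c2 /\ size w = L /\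
    (forall i, i < L -> nth One w i = if (i + k) %% N.*2 < N then c1 else c2) /\
    ((c1 = Pos c /\ c2 = Pos d) \/ (c1 = Neg d /\ c2 = Neg c)).
Proof.
move=> [[hs [k hk]]|[hs [k hk]]] cd.
  exists (Pos c), (Pos d), k; split; first by case. by auto.
exists (Neg d), (Neg c), k; split; first by case => /esym. by auto.
Qed.

Lemma prefix_nth (p w : word) i : is_prefix p w -> i < size p -> nth One w i = nth One p i.
Proof. by move=> [s ->] hi; rewrite nth_cat hi. Qed.

Lemma prefix_size (p w : word) : is_prefix p w -> size p <= size w.
Proof. by move=> [s ->]; rewrite size_cat leq_addr. Qed.

Lemma piece_core c d N N' L L' w w' p : c <> d -> 0 < N -> 0 < N' ->
  spair c d N L w -> spair c d N' L' w' -> is_prefix p w -> is_prefix p w' ->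
  (minn N N').*2 < size p -> N = N' /\ (L = L' -> w = w').
Proof.
move=> cd N0 N'0 /spair_nth /(_ cd) [c1 [c2 [k [c12 [hs [hk hc]]]]]].
move=> /spair_nth /(_ cd) [c1' [c2' [k' [c12' [hs' [hk' hc']]]]]] hp hp' hP.
have hL := prefix_size hp. have hL' := prefix_size hp'. rewrite hs in hL. rewrite hs' in hL'.
have E : forall i, i < size p -> nth One w i = nth One w' i.
  by move=> i hi; rewrite (prefix_nth hp hi) (prefix_nth hp' hi).
have hP0 : 0 < size p by move: hP; clear; lia.
have same : c1 = c1' /\ c2 = c2'.
  have := E 0 hP0. rewrite hk ?hk'; try (move: hL hL' hP0; clear; lia).
  move: hc hc' => [[-> ->]|[-> ->]] [[-> ->]|[-> ->]] //; by case: ifP; case: ifP.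
case: same => ? ?; subst c1' c2'.
have G : forall i, i < size p -> ((i+k) %% N.*2 < N) = ((i+k') %% N'.*2 < N').
  move=> i hi; have := E i hi. rewrite hk ?hk'; try (move: hL hL' hi; clear; lia).
  by case: ifP; case: ifP => // _ _ e; exfalso; apply: c12; rewrite e.
have [NN hkk] := core N0 N'0 G hP.
split => // LL; subst N'; rewrite -LL in hs' hk'.
apply: (eq_from_nth (x0 := One)); first by rewrite hs hs'.
move=> i; rewrite hs => hi; rewrite hk // hk' //.
by rewrite -modnDmr hkk modnDmr.
Qed.

Lemma rat_bound (a b : nat) : 13 * a < b -> ((a%:R < (1/13) * b%:R :> rat))%R.
Proof.
move=> h. rewrite GRing.mul1r Num.Theory.ltr_pdivlMl //.
by rewrite -GRing.natrM Num.Theory.ltr_nat.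
Qed.

Lemma red_of (Q : letter -> bool) (w : word) :
  (forall i, i < size w -> Q (nth One w i)) -> ~~ Q One ->
  (forall s, ~~ Q (Pos s) || ~~ Q (Neg s)) -> reduced w.
Proof.
move=> H h1 h2 w1 w2; split.
  move=> E; have := H (size w1); rewrite E nth_cat ltnn subnn /= size_cat /=.
  rewrite (negbTE h1) => Hf; suff: false by []; apply: Hf; lia.
have key : forall a b, w = w1 ++ [:: a, b & w2] -> Q a && Q b.
  move=> a b E.
  have := H (size w1); have := H (size w1).+1.
  have hlt : ((size w1).+1 < size w1) = false by rewrite ltnNge leqnSn.
  rewrite E !nth_cat ltnn subnn hlt subSnn /= size_cat /=.
  move=> Hb Ha; rewrite Ha ?Hb //; lia.
move=> s; split => /key; move: (h2 s); by case: (Q (Pos s)); case: (Q (Neg s)).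
Qed.

Lemma spair_reduced c d N L w : spair c d N L w -> reduced w.
Proof.
move=> [[hs [k hk]]|[hs [k hk]]].
  apply: (red_of (Q := fun l => if l is Pos _ then true else false)) => //.
  by move=> i; rewrite hs => /hk ->; case: ifP.
apply: (red_of (Q := fun l => if l is Neg _ then true else false)) => //.
by move=> i; rewrite hs => /hk ->; case: ifP.
Qed.

Lemma star_set (F : nat -> word) w : star (the_set F) w -> exists i, star (sing (F i)) w.
Proof.
elim => [w0 [i ->]| t w0 _ [i h] | w0 _ [i h]]; exists i.
- exact: star_base.
- exact: star_rot.
- exact: star_inv.
Qed.

Lemma fam_lemma c d (N K : nat -> nat) (F : nat -> word) :
  c <> d -> (forall i, 0 < N i) -> (forall i, 14 <= K i) ->
  (forall i i', N i = N i' -> i = i') ->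
  (forall i, F i = wpow (gpow c (N i) ++ gpow d (N i)) (K i)) ->
  cyc_minimal (the_set F) /\ cyc_reduced (the_set F) /\ Cprime (1/13) (the_set F) /\
  (forall i i', F i = F i' -> i = i').
Proof.
move=> cd N0 K14 Ninj hF.
have sp : forall i w, star (sing (F i)) w -> spair c d (N i) ((N i).*2 * K i) w.
  by move=> i w; rewrite hF; apply: star_spair.
have szF : forall i, size (F i) = (N i).*2 * K i.
  by move=> i; rewrite hF; case: (base_nth c d (N i) (K i)).
have starF : forall i i', star (sing (F i)) (F i') -> i = i'.
  move=> i i' h.
  have hsz : (minn (N i) (N i')).*2 < size (F i').
    rewrite szF. have := N0 i'; have := K14 i'. move: (K i') (N i') (N i) => a b b'.
    clear; move=> ha hb. have : minn b' b <= b by apply: geq_minr. nia.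
  have [NN _] := piece_core cd (N0 i) (N0 i') (sp _ _ h) (sp _ _ (star_base (erefl _)))
     (ex_intro _ [::] (esym (cats0 _))) (ex_intro _ [::] (esym (cats0 _))) hsz.
  by apply: Ninj.
split; [|split; [|split]].
- move=> r [i ->] w; split; last by move=> ->; split; [exists i | apply: star_base].
  by move=> [[i' ->] /starF ->].
- by move=> w /star_set [i /sp /spair_reduced].
- move=> u v [i ->] [i' ->] u' v' p hu hv hpu hpv.
  case: (ltnP (minn (N i) (N i')).*2 (size p)) => h.
    have [NN E] := piece_core cd (N0 i) (N0 i') (sp _ _ hu) (sp _ _ hv) hpu hpv h.
    by left; apply: E; rewrite (Ninj _ _ NN).
  right; apply: rat_bound. rewrite !szF.
  have := N0 i; have := N0 i'; have := K14 i; have := K14 i'.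
  move: h; move: (N i) (N i') (K i) (K i') (size p) => a b x y P.
  clear. move=> h hy hx hb ha.
  have : minn a b <= a by apply: geq_minl.
  have : minn a b <= b by apply: geq_minr.
  case: (leqP (a.*2 * x) (b.*2 * y)) => hh; rewrite /minn; case: ifP => _; nia.
- by move=> i i' E; apply: starF; rewrite E; apply: star_base.
Qed.

Definition geqb (a b : gen) := match a, b with
  | GA, GA | GX, GX | GB, GB | GY, GY => true | _, _ => false end.
Definition leqb (l1 l2 : letter) := match l1, l2 with
  | One, One => true | Pos a, Pos b => geqb a b | Neg a, Neg b => geqb a b | _, _ => false end.
Lemma leqbP l1 l2 : leqb l1 l2 -> l1 = l2.
Proof. by case: l1; case: l2 => // [] [] []. Qed.
Lemma leqb_refl l : leqb l l.
Proof. by case: l => // [] []. Qed.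

Lemma all_rot' T (a : pred T) t (w : seq T) : all a (rot t w) = all a w.
Proof. by rewrite /rot all_cat andbC -all_cat cat_take_drop. Qed.

Lemma star_y (h : int) w : star (sing (ypow h)) w -> exists l, all (leqb^~ l) w.
Proof.
elim => [w0 -> | t w0 _ [l hl] | w0 _ [l hl]].
- case: h => k; [exists (Pos GY) | exists (Neg GY)]; by rewrite all_nseq leqb_refl orbT.
- by exists l; rewrite all_rot'.
- exists (linv l); rewrite /winv all_rev all_map; apply: sub_all hl => x /= /leqbP ->.
  exact: leqb_refl.
Qed.

Lemma ypiece N K (h : int) w : 0 < N -> 14 <= K ->
  piece w (ypow h) (wpow (gpow GB N ++ gpow GY N) K) ->
  13 * size w < size (wpow (gpow GB N ++ gpow GY N) K).
Proof.
move=> N0 K14 [u' [v' [hu [hv [hpu hpv]]]]].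
have [hs _] := base_nth GB GY N K. rewrite hs.
suff : size w <= N by move: K14 N0; clear; nia.
case: (leqP (size w) N) => // hN; exfalso.
have [l hl] := star_y hu.
have [c1 [c2 [k [c12 [hs' [hk _]]]]]] := spair_nth (star_spair N0 hv) ltac:(by []).
have hL := prefix_size hpv. rewrite hs' in hL.
have hL2 := prefix_size hpu.
have A : forall i, i < size w -> nth One v' i = l.
  move=> i hi; rewrite (prefix_nth hpv hi) -(prefix_nth hpu hi).
  apply: leqbP; move/(all_nthP One): hl; apply; move: hi hL2; clear; lia.
have a0 := A 0 ltac:(move: hN; clear; lia).
have aN := A N hN.
rewrite hk in a0; last by move: hN hL; clear; lia.
rewrite hk in aN; last by move: hN hL; clear; lia.
rewrite add0n in a0. rewrite addnC g_flip // in aN.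
apply: c12; move: a0 aN; case: (_ < N) => /= -> -> //.
Qed.

Lemma bstart_lt n j : ext_pos n -> bstart n j < bstart n j.+1.
Proof. case: n => [k|] /= h; [nia | rewrite !expnS !expn0; nia]. Qed.

Lemma bstart_mono n j j' : ext_pos n -> j <= j' -> bstart n j <= bstart n j'.
Proof. case: n => [k|] /= h hj; [nia | rewrite !expnS !expn0; nia]. Qed.

Lemma blk_inP n i : ext_pos n -> inP n (bidx n i) i.
Proof.
rewrite /inP; case: n => [k|] /= h.
  by rewrite leq_trunc_div ltn_ceil.
have [h1 h2] := Nat.sqrt_specif i.
rewrite !expnS !expn0 !muln1. apply/andP; split.
  by apply/leP.
by apply/ltP.
Qed.

Lemma blk_uniq n j i : ext_pos n -> inP n j i -> j = bidx n i.
Proof.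
move=> hn hj; have hb := blk_inP i hn; move: hj hb; rewrite /inP.
set j' := bidx n i => /andP[a1 a2] /andP[b1 b2].
case: (ltngtP j j') => // h; exfalso.
  have := bstart_mono hn h; lia.
have := bstart_mono hn h; lia.
Qed.

Lemma bsize_growth n j : ext_pos n -> bsize n j.+1 - 1 < growth n j.
Proof. rewrite /bsize; case: n => [k|] /= h; [nia | rewrite !expnS !expn0; nia]. Qed.

Lemma bstart_growth n j : bstart n j.+1 <= growth n j.
Proof. case: n => [k|] /=; [nia | rewrite !expnS !expn0; nia]. Qed.

Lemma Pmono (P : nat -> nat) : (forall j, P j < P j.+1) -> forall j j', j <= j' -> P j <= P j'.
Proof.
move=> h j j' /subnK <-; elim: (j' - j) => [|d IH] //=.
by rewrite addSn; apply: (leq_trans IH); apply: ltnW.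
Qed.

Lemma side n (P : nat -> nat) c d (F : nat -> word) :
  ext_pos n -> c <> d -> (forall j, P j < P j.+1) -> (forall j, bsize n j - 1 <= P j) ->
  (forall j, P j + growth n j <= P j.+1) ->
  (forall j i, inP n j i ->
     F i = wpow (gpow c (14 ^ (P j - (i - bstart n j))) ++ gpow d (14 ^ (P j - (i - bstart n j))))
                (14 ^ ((i - bstart n j).+1))) ->
  (cyc_minimal (the_set F) /\ cyc_reduced (the_set F) /\ Cprime (1/13) (the_set F) /\
   (forall i i', F i = F i' -> i = i')) /\
  (forall i, size (F i) = 2 * 14 ^ (P (bidx n i)).+1) /\
  (forall i, exists N K, 0 < N /\ 14 <= K /\ F i = wpow (gpow c N ++ gpow d N) K).
Proof.
move=> hn cd Pinc Pbs Pgr hF.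
have oP : forall i, i - bstart n (bidx n i) <= P (bidx n i).
  move=> i; have := Pbs (bidx n i); have := blk_inP i hn; rewrite /inP /bsize; lia.
have hF' : forall i, F i = wpow (gpow c (14 ^ (P (bidx n i) - (i - bstart n (bidx n i)))) ++
      gpow d (14 ^ (P (bidx n i) - (i - bstart n (bidx n i))))) (14 ^ (i - bstart n (bidx n i)).+1).
  by move=> i; apply: hF; apply: blk_inP.
have elt : forall i i', bidx n i < bidx n i' ->
    P (bidx n i) - (i - bstart n (bidx n i)) < P (bidx n i') - (i' - bstart n (bidx n i')).
  move=> i i'; have := blk_inP i' hn; rewrite /inP.
  move: (bidx n i) (bidx n i') => j [//|j0] hin hj.
  have h1 := Pmono Pinc (hj : j <= j0).
  have h2 := Pgr j0. have h3 := bsize_growth j0 hn.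
  move: h3; rewrite /bsize; lia.
have einj : forall i i', 14 ^ (P (bidx n i) - (i - bstart n (bidx n i))) =
                         14 ^ (P (bidx n i') - (i' - bstart n (bidx n i'))) -> i = i'.
  move=> i i' /expnI E; have {}E := E isT.
  case: (ltngtP (bidx n i) (bidx n i')) => hb.
  - by have := elt _ _ hb; rewrite E ltnn.
  - by have := elt _ _ hb; rewrite E ltnn.
  have := oP i; have := oP i'; have := blk_inP i hn; have := blk_inP i' hn.
  rewrite /inP hb in E *; lia.
split; [|split].
- apply: (@fam_lemma c d (fun i => 14 ^ (P (bidx n i) - (i - bstart n (bidx n i))))
                   (fun i => 14 ^ (i - bstart n (bidx n i)).+1)) => //.
  + by move=> i; rewrite expn_gt0.
  + by move=> i; rewrite expnS leq_pmulr // expn_gt0.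
- move=> i; rewrite hF'; have [-> _] := base_nth c d (14 ^ (P (bidx n i) - (i - bstart n (bidx n i))))
     (14 ^ (i - bstart n (bidx n i)).+1).
  rewrite -mul2n -mulnA -expnD; congr (2 * 14 ^ _); have := oP i; lia.
- move=> i; eexists; eexists; split; last split; last by apply: hF'.
  + by rewrite expn_gt0.
  + by rewrite expnS leq_pmulr // expn_gt0.
Qed.
Import Order.TTheory GRing.Theory Num.Theory.

Lemma bidx_start n j : ext_pos n -> bidx n (bstart n j) = j.
Proof. move=> hn; apply/esym/blk_uniq => //; by rewrite /inP leqnn bstart_lt. Qed.

Unset Implicit Arguments.
Theorem lemma4p3 (m : nat) (n : ext) (p q : nat -> nat) (u v : nat -> word) :
  ext_pos (Fin m) -> ext_pos n -> ext_lt (Fin m) n ->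
  (forall j, 0 < p j) -> (forall j, p j < p j.+1) ->
  (forall j, 0 < q j) -> (forall j, q j < q j.+1) ->
  (forall j, bsize (Fin m) j - 1 <= p j) ->
  (forall j, bsize n j - 1 <= q j) ->
  (forall j i, inP (Fin m) j i ->
     u i = wpow (gpow GA (14 ^ (p j - (i - bstart (Fin m) j))) ++
                 gpow GX (14 ^ (p j - (i - bstart (Fin m) j))))
                (14 ^ ((i - bstart (Fin m) j).+1))) ->
  (forall j i, inP n j i ->
     v i = wpow (gpow GB (14 ^ (q j - (i - bstart n j))) ++
                 gpow GY (14 ^ (q j - (i - bstart n j))))
                (14 ^ ((i - bstart n j).+1))) ->
  (* (a) *) (forall j, p j + (j + 2) * m <= p j.+1) ->
  (* (b) *) (forall j, q j + growth n j <= q j.+1) ->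
  (* (c) *) (forall i, p (i %/ m) <= q (bidx n i)) ->
  let lam : rat := (1 / 13)%R in
  (* (1) *)
  (cyc_minimal (the_set u) /\ cyc_reduced (the_set u) /\ Cprime lam (the_set u) /\
   cyc_minimal (the_set v) /\ cyc_reduced (the_set v) /\ Cprime lam (the_set v)) /\
  (* (2) *)
  (forall (h : int) (i : nat) (w : word), piece w (ypow h) (v i) ->
     ((size w)%:R < lam * (size (v i))%:R :> rat)%R) /\
  (* (3) *)
  (forall i, 2 <= size (u i) <= size (v i)) /\
  (* (4) *)
  (forall i i', (u i = u i' -> i = i') /\ (v i = v i' -> i = i')) /\
  (* (5) *)
  (forall j i i', (inP (Fin m) j i -> inP (Fin m) j i' -> size (u i) = size (u i')) /\
                  (inP n j i -> inP n j i' -> size (v i) = size (v i'))) /\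
  (* (6) *)
  (forall j, 14 ^ (bstart (Fin m) j.+1) * size (u (bstart (Fin m) j))
               <= size (u (bstart (Fin m) j.+1)) /\
             14 ^ (bstart n j.+1) * size (v (bstart n j)) <= size (v (bstart n j.+1))).
Proof.
move=> hm hn hmn p0 pinc q0 qinc pbs qbs hu hv ha hb hc lam.
have gax : GA <> GX by [].
have gby : GB <> GY by [].
have [[Um [Ur [Uc Ui]]] [Us Ush]] := side hm gax pinc pbs ha hu.
have [[Vm [Vr [Vc Vi]]] [Vs Vsh]] := side hn gby qinc qbs hb hv.
split; [|split; [|split; [|split; [|split]]]].
- split; first exact Um. split; first exact Ur. split; first exact Uc.
  split; first exact Vm. split; first exact Vr. exact Vc.
- move=> h i w hw. have [N [K [N0 [K14 E]]]] := Vsh i. rewrite E in hw *.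
  by apply: rat_bound; apply: ypiece hw.
- move=> i; rewrite Us Vs; apply/andP; split.
    by rewrite -{1}(muln1 2) leq_mul2l /= expn_gt0.
  by rewrite leq_mul2l /= leq_pexp2l //; apply: hc.
- by move=> i i'; split; [apply: Ui | apply: Vi].
- move=> j i i'; split => h1 h2.
    by rewrite !Us -(blk_uniq hm h1) -(blk_uniq hm h2).
  by rewrite !Vs -(blk_uniq hn h1) -(blk_uniq hn h2).
- move=> j; rewrite !Us !Vs !bidx_start //; split;
  rewrite mulnCA -expnD leq_mul2l /= leq_pexp2l // addnS ltnS.
    have := ha j; clear; nia.
  have := hb j; have := bstart_growth n j; clear; lia.
Qed.
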